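(* Let $A$ be a pc monoid whose seminormalization $A\to A_{\mathrm{sn}}$ exists, let $I$ be an ideal of $A$, and set $J=\sqrt{IA_{\mathrm{sn}}}$. Then the induced map $A/I\to A_{\mathrm{sn}}/J$ is the seminormalization of $A/I$.
   Context: A monoid is a pointed commutative monoid. An ideal is a subset $I\ni0$ with $AI\subseteq I$; $A/I$ collapses $I$ to $0$; $IB$ is the ideal of $B$ generated by the image of $I$; $\sqrt{K}=\{b: b^n\in K\text{ for some }n\ge1\}$. pc: isomorphic to $C/I$ with $C$ cancellative ($ac=bc,c\ne0\Rightarrow a=b$). Reduced: $a^2=b^2,a^3=b^3\Rightarrow a=b$; $A_{\mathrm{red}}$ is $A$ modulo $a\sim b$ iff $a^n=b^n$ for all $n\gg0$. Seminormal: reduced and $x^3=y^2\Rightarrow x=z^2,y=z^3$ for some $z$. A seminormalization of $A$ is a map $A\to B$ with $B$ seminormal, $A_{\mathrm{red}}\to B$ injective, and $b^n\in A_{\mathrm{red}}$ for all $n\gg0$ for every $b\in B$. *)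

(* Defs.v *)
From Stdlib Require Import Arith Lia ClassicalEpsilon ProofIrrelevance.

Set Implicit Arguments.

Record pmonoid := PMonoid {
  car :> Type;
  mul : car -> car -> car;
  one : car;
  zero : car;
  mulA : forall a b c, mul a (mul b c) = mul (mul a b) c;
  mulC : forall a b, mul a b = mul b a;
  mul1 : forall a, mul one a = a;
  mul0 : forall a, mul zero a = zero
}.

Arguments mul {p}.
Arguments one {p}.
Arguments zero {p}.

Definition pw {A : pmonoid} (a : A) (n : nat) : A := Nat.iter n (mul a) one.

Definition is_hom {A B : pmonoid} (f : A -> B) : Prop :=
  (forall a b, f (mul a b) = mul (f a) (f b)) /\ f one = one /\ f zero = zero.

Definition is_iso {A B : pmonoid} (f : A -> B) : Prop :=
  is_hom f /\ (forall a b, f a = f b -> a = b) /\ (forall b, exists a, f a = b).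

Definition is_ideal (A : pmonoid) (I : A -> Prop) : Prop :=
  I zero /\ forall a x : A, I x -> I (mul a x).

Definition ext_ideal {A B : pmonoid} (f : A -> B) (I : A -> Prop) : B -> Prop :=
  fun b => exists (x : B) (a : A), I a /\ b = mul x (f a).

Definition rad {B : pmonoid} (K : B -> Prop) : B -> Prop :=
  fun b => exists n, 1 <= n /\ K (pw b n).

Definition cancellative (C : pmonoid) : Prop :=
  forall a b c : C, c <> zero -> mul a c = mul b c -> a = b.

Definition reduced (A : pmonoid) : Prop :=
  forall a b : A, pw a 2 = pw b 2 -> pw a 3 = pw b 3 -> a = b.

Definition seminormal (A : pmonoid) : Prop :=
  reduced A /\
  forall x y : A, pw x 3 = pw y 2 -> exists z : A, x = pw z 2 /\ y = pw z 3.

(* the relation defining A_red: a ~ b iff a^n = b^n for all n >> 0 *)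
Definition red_rel {A : pmonoid} (a b : A) : Prop :=
  exists N, forall n, N <= n -> pw a n = pw b n.

Section Quot.
Variables (A : pmonoid) (I : A -> Prop) (hI : is_ideal A I).

Definition qcar : Type := { a : A | a = zero \/ ~ I a }.

Definition qval (a : A) : A :=
  if excluded_middle_informative (I a) then zero else a.

Lemma qval_prop (a : A) : qval a = zero \/ ~ I (qval a).
Proof.
  unfold qval; destruct (excluded_middle_informative (I a)); auto.
Qed.

Definition qproj (a : A) : qcar := exist _ (qval a) (qval_prop a).

Lemma qcar_eq (x y : qcar) : proj1_sig x = proj1_sig y -> x = y.
Proof.
  destruct x as [x px], y as [y py]; simpl; intros ->.
  f_equal; apply proof_irrelevance.
Qed.

Lemma qval_in (a : A) : I a -> qval a = zero.
Proof. unfold qval; destruct (excluded_middle_informative (I a)); tauto. Qed.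

Lemma qval_out (a : A) : ~ I a -> qval a = a.
Proof. unfold qval; destruct (excluded_middle_informative (I a)); tauto. Qed.

Lemma qproj_val (x : qcar) : qproj (proj1_sig x) = x.
Proof.
  apply qcar_eq; simpl; destruct x as [x [px|px]]; simpl.
  - subst; apply qval_in, (proj1 hI).
  - apply qval_out, px.
Qed.

Lemma qproj_norm (a b : A) : qproj (mul (qval a) b) = qproj (mul a b).
Proof.
  apply qcar_eq; simpl.
  destruct (excluded_middle_informative (I a)) as [h|h].
  - rewrite (qval_in h), mul0.
    rewrite (qval_in (proj1 hI)).
    rewrite qval_in; auto. rewrite mulC; apply (proj2 hI), h.
  - rewrite (qval_out h); reflexivity.
Qed.

Definition qmul (x y : qcar) : qcar := qproj (mul (proj1_sig x) (proj1_sig y)).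
Definition qone : qcar := qproj one.
Definition qzero : qcar := qproj zero.

Lemma qmulA (x y z : qcar) : qmul x (qmul y z) = qmul (qmul x y) z.
Proof.
  unfold qmul; simpl.
  rewrite (qproj_norm (mul (proj1_sig x) (proj1_sig y))).
  rewrite mulC, (qproj_norm (mul (proj1_sig y) (proj1_sig z))).
  f_equal; rewrite mulC, mulA; reflexivity.
Qed.

Lemma qmulC (x y : qcar) : qmul x y = qmul y x.
Proof. unfold qmul; rewrite mulC; reflexivity. Qed.

Lemma qmul1 (x : qcar) : qmul qone x = x.
Proof. unfold qmul, qone; simpl; rewrite qproj_norm, mul1; apply qproj_val. Qed.

Lemma qmul0 (x : qcar) : qmul qzero x = qzero.
Proof. unfold qmul, qzero; simpl; rewrite qproj_norm, mul0; reflexivity. Qed.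

Definition quot : pmonoid := @PMonoid qcar qmul qone qzero qmulA qmulC qmul1 qmul0.

End Quot.

Definition pc (A : pmonoid) : Prop :=
  exists (C : pmonoid) (I : C -> Prop) (hI : is_ideal C I) (g : A -> quot hI),
    cancellative C /\ is_iso g.

(* f : A -> B is a seminormalization of A:
   B seminormal, the induced map A_red -> B is (well defined and) injective,
   i.e. f a = f b <-> a ~ b, and every b has b^n in the image of A_red
   (= image of A) for all n >> 0. *)
Definition is_seminormalization {A B : pmonoid} (f : A -> B) : Prop :=
  is_hom f /\ seminormal B /\
  (forall a b : A, f a = f b <-> red_rel a b) /\
  (forall b : B, exists N, forall n, N <= n -> exists a : A, f a = pw b n).

Lemma rad_ext_ideal_is_ideal {A B : pmonoid} (f : A -> B) (I : A -> Prop) :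
  is_ideal A I -> is_ideal B (rad (ext_ideal f I)).
Proof.
  intros [I0 IM]; split.
  - exists 1; split; [lia|]. exists zero, zero; split; [exact I0|].
    unfold pw; simpl; rewrite !mul0; reflexivity.
  - intros a x [n [hn [y [c [hc e]]]]].
    exists n; split; [exact hn|].
    assert (E : forall m, pw (mul a x) m = mul (pw a m) (pw x m)).
    { induction m; unfold pw in *; simpl. rewrite mul1; reflexivity.
      rewrite IHm, <- !mulA. f_equal.
      rewrite !mulA, (mulC _ x); reflexivity. }
    exists (mul (pw a n) y), c; split; [exact hc|].
    rewrite E, e, mulA; reflexivity.
Qed.

Definition induced_map {A B : pmonoid} (I : A -> Prop) (J : B -> Prop)
  (hI : is_ideal A I) (hJ : is_ideal B J) (f : A -> B) :
  quot hI -> quot hJ :=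
  fun x => @qproj B J (f (proj1_sig x)).

(* Main.v *)
Require Import Defs.
From Stdlib Require Import Arith Lia Classical.

Section Gen.
Variable A : pmonoid.

Lemma pw_S (a : A) n : pw a (S n) = mul a (pw a n).
Proof. reflexivity. Qed.

Lemma pw_add (a : A) n m : pw a (n + m) = mul (pw a n) (pw a m).
Proof.
  induction n.
  - change (pw a m = mul one (pw a m)); rewrite mul1; reflexivity.
  - change (pw a (S (n+m)) = mul (pw a (S n)) (pw a m)).
    rewrite !pw_S, IHn, mulA; reflexivity.
Qed.

Lemma pw_mulM (a b : A) n : pw (mul a b) n = mul (pw a n) (pw b n).
Proof.
  induction n. simpl. unfold pw; simpl; rewrite mul1; reflexivity.
  rewrite !pw_S, IHn. rewrite <- !mulA. f_equal.
  rewrite !mulA, (mulC _ b (pw a n)); reflexivity.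
Qed.

Lemma pw_mul (a : A) n m : pw a (n * m) = pw (pw a n) m.
Proof.
  induction m. rewrite Nat.mul_0_r; reflexivity.
  rewrite Nat.mul_succ_r, Nat.add_comm, pw_add, IHm, pw_S; reflexivity.
Qed.

Lemma pw_1 (a : A) : pw a 1 = a.
Proof. unfold pw; simpl. rewrite mulC, mul1; reflexivity. Qed.

Lemma ideal_pw (I : A -> Prop) (hI : is_ideal A I) a n :
  I a -> 1 <= n -> I (pw a n).
Proof.
  intros h hn. destruct n. lia. rewrite pw_S, mulC. apply (proj2 hI), h.
Qed.

Lemma ideal_pw_large (I : A -> Prop) (hI : is_ideal A I) a n k :
  I (pw a n) -> n <= k -> I (pw a k).
Proof.
  intros h hk. replace k with ((k - n) + n) by lia. rewrite pw_add.
  apply (proj2 hI), h.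
Qed.

Lemma radrad (K : A -> Prop) b n : 1 <= n -> rad K (pw b n) -> rad K b.
Proof.
  intros hn [m [hm e]]. exists (n * m); split. nia. rewrite pw_mul; exact e.
Qed.

Lemma rad_pw (K : A -> Prop) (hK : is_ideal A K) b n :
  1 <= n -> rad K b -> rad K (pw b n).
Proof.
  intros hn [m [hm e]]. exists m; split; auto.
  rewrite <- pw_mul, Nat.mul_comm, pw_mul. apply ideal_pw; auto.
Qed.

Section Q.
Variables (I : A -> Prop) (hI : is_ideal A I).

Lemma q_ex (x : quot hI) : exists a, x = qproj A I a.
Proof. exists (proj1_sig x). symmetry; apply (qproj_val hI). Qed.

Lemma q_mul a b : @mul (quot hI) (qproj A I a) (qproj A I b) = qproj A I (mul a b).
Proof.
  simpl. unfold qmul; simpl. rewrite (qproj_norm hI).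
  rewrite mulC, (qproj_norm hI), mulC; reflexivity.
Qed.

Lemma q_pw a n : @pw (quot hI) (qproj A I a) n = qproj A I (pw a n).
Proof.
  induction n. reflexivity.
  transitivity (@mul (quot hI) (qproj A I a) (qproj A I (pw a n))).
  rewrite <- IHn; reflexivity. rewrite q_mul; reflexivity.
Qed.

Lemma q_eq a b : qproj A I a = qproj A I b <->
  (I a /\ I b) \/ (~ I a /\ ~ I b /\ a = b).
Proof.
  split.
  - intro e. assert (e' : qval A I a = qval A I b) by
      (change (proj1_sig (qproj A I a) = proj1_sig (qproj A I b)); rewrite e; reflexivity).
    destruct (classic (I a)) as [ha|ha]; destruct (classic (I b)) as [hb|hb].
    + auto.
    + rewrite (qval_in _ _ _ ha), (qval_out _ _ _ hb) in e'. subst b.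
      exfalso; apply hb, (proj1 hI).
    + rewrite (qval_in _ _ _ hb), (qval_out _ _ _ ha) in e'. subst a.
      exfalso; apply ha, (proj1 hI).
    + rewrite (qval_out _ _ _ ha), (qval_out _ _ _ hb) in e'. auto.
  - intros [[ha hb]|[ha [hb e]]].
    + apply qcar_eq; simpl. rewrite (qval_in _ _ _ ha), (qval_in _ _ _ hb); reflexivity.
    + subst; reflexivity.
Qed.
End Q.
End Gen.

Lemma hom_pw (A B : pmonoid) (f : A -> B) : is_hom f ->
  forall a n, f (pw a n) = pw (f a) n.
Proof.
  intros [hm [h1 h0]] a n. induction n. exact h1.
  rewrite !pw_S, hm, IHn; reflexivity.
Qed.

Arguments q_eq {A I} hI a b.
Arguments q_mul {A I} hI a b.
Arguments q_pw {A I} hI a n.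
Arguments q_ex {A I} hI x.
Arguments ideal_pw {A I} hI a n _ _.
Arguments ideal_pw_large {A I} hI a n k _ _.
Arguments hom_pw {A B f} _ a n.

Theorem lemma1p14 (A B : pmonoid) (f : A -> B) (I : A -> Prop)
  (hpc : pc A) (hsn : is_seminormalization f) (hI : is_ideal A I) :
  is_seminormalization
    (@induced_map A B I (rad (ext_ideal f I)) hI
       (rad_ext_ideal_is_ideal f hI) f).
Proof.
  set (J := rad (ext_ideal f I)).
  set (hJ := rad_ext_ideal_is_ideal f hI).
  destruct hsn as [hf [[hred hsemi] [hinj hsurj]]].
  pose proof hf as [hfm [hf1 hf0]].
  assert (JfI : forall a, rad I a -> J (f a)).
  { intros a [n [hn e]]. exists n; split; auto. exists one, (pw a n); split; auto.
    rewrite mul1, (hom_pw hf); auto. }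
  assert (L : forall a, J (f a) -> rad I a).
  { intros a [n [hn [x [c [hc e]]]]].
    destruct (hsurj x) as [N hN]. destruct (hN (S N)) as [a' ea']; [lia|].
    assert (E : f (pw a (n * S N)) = f (mul a' (pw c (S N)))).
    { rewrite (hom_pw hf), pw_mul, e, pw_mulM, hfm, ea', (hom_pw hf). reflexivity. }
    apply hinj in E. destruct E as [N' hN'].
    exists (n * S N * S N'). split. nia.
    rewrite pw_mul, hN' by lia. apply ideal_pw; auto; [|lia].
    apply (proj2 hI). apply ideal_pw; auto; lia. }
  assert (gproj : forall a, @induced_map A B I J hI hJ f (qproj A I a) = qproj B J (f a)).
  { intro a. unfold induced_map; simpl.
    destruct (classic (I a)) as [ha|ha].
    - rewrite (qval_in _ _ _ ha), hf0. apply (q_eq hJ). left. split.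
      apply (proj1 hJ). apply JfI. exists 1; split; auto. rewrite pw_1; auto.
    - rewrite (qval_out _ _ _ ha); reflexivity. }
  assert (Jpw : forall b n, 1 <= n -> (J (pw b n) <-> J b)).
  { intros b n hn; split. apply radrad; auto. intro h; apply ideal_pw; auto. }
  split; [|split; [|split]].
  - split; [|split].
    + intros x y. destruct (q_ex hI x) as [a ->]; destruct (q_ex hI y) as [b ->].
      rewrite (q_mul hI), !gproj, hfm. symmetry; apply (q_mul hJ).
    + change (@one (quot hI)) with (qproj A I one). rewrite gproj, hf1; reflexivity.
    + change (@zero (quot hI)) with (qproj A I zero). rewrite gproj, hf0; reflexivity.
  - split.
    + intros x y. destruct (q_ex hJ x) as [b ->]; destruct (q_ex hJ y) as [c ->].
      rewrite !(q_pw hJ). intros h0 h3. apply (q_eq hJ) in h0, h3.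
      destruct h0 as [[h1 h2]|[h1 [h2 e2]]].
      * apply (q_eq hJ); left; split.
        apply (Jpw b 2); [lia|exact h1]. apply (Jpw c 2); [lia|exact h2].
      * destruct h3 as [[h3 _]|[_ [_ e3]]].
        -- exfalso; apply h1. apply (Jpw b 2); [lia|]. apply (Jpw b 3); [lia|]. exact h3.
        -- f_equal; apply hred; auto.
    + intros x y. destruct (q_ex hJ x) as [b ->]; destruct (q_ex hJ y) as [c ->].
      rewrite !(q_pw hJ). intros h0. apply (q_eq hJ) in h0.
      destruct h0 as [[h1 h2]|[h1 [h2 e]]].
      * assert (Z : J (pw zero 2)) by (apply (ideal_pw hJ); [apply (proj1 hJ)|lia]).
        assert (Z3 : J (pw zero 3)) by (apply (ideal_pw hJ); [apply (proj1 hJ)|lia]).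
        exists (qproj B J zero). rewrite !(q_pw hJ). split; apply (q_eq hJ); left; split; auto.
        apply (Jpw b 3); [lia|exact h1]. apply (Jpw c 2); [lia|exact h2].
      * destruct (hsemi _ _ e) as [z [-> ->]]. exists (qproj B J z).
        rewrite !(q_pw hJ); auto.
  - intros x y. destruct (q_ex hI x) as [a ->]; destruct (q_ex hI y) as [b ->].
    rewrite !gproj. split.
    + intros h0; apply (q_eq hJ) in h0. destruct h0 as [[h1 h2]|[h1 [h2 e]]].
      * apply L in h1. apply L in h2. destruct h1 as [n [hn e1]], h2 as [m [hm e2]].
        exists (n+m). intros k hk. rewrite !(q_pw hI). apply (q_eq hI). left; split.
        apply (ideal_pw_large hI a n k e1); lia.
        apply (ideal_pw_large hI b m k e2); lia.
      * apply hinj in e. destruct e as [N hN]. exists N. intros k hk.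
        rewrite !(q_pw hI), hN; auto.
    + intros [N hN]. apply (q_eq hJ).
      destruct (classic (J (f a))) as [ha|ha].
      * left; split; auto. destruct (L _ ha) as [n [hn e1]].
        assert (H := hN (N+n) ltac:(lia)). rewrite !(q_pw hI), (q_eq hI) in H.
        destruct H as [[_ hb]|[hna _]].
        -- apply JfI. exists (N+n); split; [lia|auto].
        -- exfalso; apply hna. apply (ideal_pw_large hI a n); auto; lia.
      * destruct (classic (J (f b))) as [hb|hb].
        -- exfalso. destruct (L _ hb) as [n [hn e1]].
           assert (H := hN (N+n) ltac:(lia)). rewrite !(q_pw hI), (q_eq hI) in H.
           destruct H as [[ha' _]|[_ [hnb _]]].
           ++ apply ha, JfI. exists (N+n); split; [lia|auto].
           ++ apply hnb. apply (ideal_pw_large hI b n); auto; lia.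
        -- right; split; auto; split; auto. apply hinj. exists (S N). intros k hk.
           assert (H := hN k ltac:(lia)). rewrite !(q_pw hI), (q_eq hI) in H.
           destruct H as [[h1 _]|[_ [_ e]]]; auto.
           exfalso; apply ha, JfI; exists k; split; [lia|auto].
  - intro y. destruct (q_ex hJ y) as [b ->]. destruct (hsurj b) as [N hN].
    exists N. intros n hn. destruct (hN n hn) as [a ea]. exists (qproj A I a).
    rewrite gproj, ea, (q_pw hJ); reflexivity.
Qed.
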